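(* Let $n\ge2$ and $\mathsf u\in\mathcal S_n$. Then $\mathsf r^{\mathsf u}$ is a tree-like factorization of $\lambda_n$.
   Context: $\widetilde S_n$ is the group, under composition $(vw)(k)=v(w(k))$, of bijections $w:\mathbb Z\to\mathbb Z$ with $w(i+n)=w(i)+n$ and $\sum_{i=1}^n w(i)=\binom{n+1}2$. For $i\not\equiv j\pmod n$, $(\!(i,j)\!)$ swaps $i+kn$ and $j+kn$ for all $k$; $(\!(i,j)\!)=(\!(j,i)\!)=(\!(i+kn,j+kn)\!)$; $s_i=(\!(i,i+1)\!)$, $i\in\{0,\dots,n-1\}$. $\lambda_n(k)=k+n$ for $k\not\equiv0\pmod n$, $\lambda_n(k)=k-n(n-1)$ for $k\equiv0\pmod n$; its reflection length is $2n-2$, and $\textsc{fact}(\lambda_n)$ is the set of sequences of $2n-2$ reflections with product $\lambda_n$. A sequence $[r_1,\dots,r_{2n-2}]\in\textsc{fact}(\lambda_n)$ is tree-like if one can write $r_k=(\!(a_{k-1},b_k)\!)$ with integers $a_{k-1}<b_k$ ($1\le k\le 2n-2$) and $a_k\equiv b_k\pmod n$ ($1\le k\le 2n-3$). $\bm\lambda_n$ is the word $[s_0,\dots,s_{n-1}]$ repeated $n-1$ times with $j$-th letter $\sigma_j=s_{(j-1)\bmod n}$. A subword is $\mathsf u=[u_1,\dots,u_{n(n-1)}]$ with $u_j\in\{\sigma_j,e\}$; $j$ is a skip if $u_j=e$. $u_{(j)}=u_1\cdots u_j$, $u_{(0)}=e$. $\mathcal S_n$ is the set of subwords with exactly $2n-2$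 skips and product $e$. $\textsc{inv}(\mathsf u)=[t_1,\dots,t_{n(n-1)}]$, $t_j=u_{(j-1)}\sigma_ju_{(j-1)}^{-1}$, and $\mathsf r^{\mathsf u}$ is the subsequence of the $t_j$ at skips $j$, in increasing order. *)

(* Defs.v *)
From Stdlib Require Import ZArith List Lia.
Import ListNotations.
Open Scope Z_scope.

(* Elements of the affine symmetric group are represented as functions Z -> Z;
   composition (v w)(k) = v (w k). *)
Definition comp (v w : Z -> Z) : Z -> Z := fun k => v (w k).

Definition prod (l : list (Z -> Z)) : Z -> Z := fold_right comp (fun k => k) l.

(* The reflection ((i,j)) in \tilde S_n (meaningful when i, j differ mod n):
   swaps i + kn and j + kn for all k, fixes every other integer. *)
Definition refl (n : nat) (i j : Z) : Z -> Z := fun k =>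
  if Z.eqb (k mod Z.of_nat n) (i mod Z.of_nat n) then k + (j - i)
  else if Z.eqb (k mod Z.of_nat n) (j mod Z.of_nat n) then k + (i - j)
  else k.

Definition is_reflection (n : nat) (r : Z -> Z) : Prop :=
  exists i j : Z, i mod Z.of_nat n <> j mod Z.of_nat n /\
    forall k, r k = refl n i j k.

Definition s (n : nat) (i : Z) : Z -> Z := refl n i (i + 1).

Definition lambda (n : nat) : Z -> Z := fun k =>
  if Z.eqb (k mod Z.of_nat n) 0 then k - Z.of_nat n * (Z.of_nat n - 1)
  else k + Z.of_nat n.

Definition in_fact (n : nat) (l : list (Z -> Z)) : Prop :=
  length l = (2 * n - 2)%nat /\ Forall (is_reflection n) l /\
  forall k, prod l k = lambda n k.

(* tree-like: r_k = ((a_{k-1}, b_k)) with a_{k-1} < b_k (1 <= k <= 2n-2)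
   and a_k = b_k mod n (1 <= k <= 2n-3).  Writing ((a,b)) presupposes
   a <> b mod n. Entry r_k is nth (k-1) l. *)
Definition tree_like (n : nat) (l : list (Z -> Z)) : Prop :=
  in_fact n l /\
  exists a b : nat -> Z,
    (forall k : nat, (1 <= k <= 2 * n - 2)%nat ->
       a (k - 1)%nat < b k /\
       a (k - 1)%nat mod Z.of_nat n <> b k mod Z.of_nat n /\
       forall x, nth (k - 1) l (fun y => y) x = refl n (a (k - 1)%nat) (b k) x) /\
    (forall k : nat, (1 <= k <= 2 * n - 3)%nat ->
       a k mod Z.of_nat n = b k mod Z.of_nat n).

(* The word bold-lambda_n: j-th letter sigma_j = s_{(j-1) mod n}, 1 <= j <= n(n-1). *)
Definition sigma (n j : nat) : Z -> Z := s n (Z.of_nat ((j - 1) mod n)).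

(* A subword is encoded by its skip pattern sk : list bool of length n(n-1):
   nth (j-1) sk false = true  iff  j is a skip (u_j = e). *)
Definition is_skip (sk : list bool) (j : nat) : bool := nth (j - 1) sk false.

Definition letter (n : nat) (sk : list bool) (j : nat) : Z -> Z :=
  if is_skip sk j then (fun k => k) else sigma n j.

Definition prefix (n : nat) (sk : list bool) (j : nat) : Z -> Z :=
  prod (map (letter n sk) (seq 1 j)).

(* u_(j)^{-1} = u_j ... u_1 (each u_i is e or an involution s_i) *)
Definition prefix_inv (n : nat) (sk : list bool) (j : nat) : Z -> Z :=
  prod (map (letter n sk) (rev (seq 1 j))).

Definition in_Sn (n : nat) (sk : list bool) : Prop :=
  length sk = (n * (n - 1))%nat /\
  length (filter (fun b => b) sk) = (2 * n - 2)%nat /\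
  forall k, prefix n sk (n * (n - 1)) k = k.

Definition t (n : nat) (sk : list bool) (j : nat) : Z -> Z :=
  comp (prefix n sk (j - 1)) (comp (sigma n j) (prefix_inv n sk (j - 1))).

Definition r_u (n : nat) (sk : list bool) : list (Z -> Z) :=
  map (t n sk) (filter (is_skip sk) (seq 1 (n * (n - 1)))).

(* Main.v *)
Require Import Defs.
From Stdlib Require Import ZArith List Lia.
Import ListNotations.
Local Open Scope nat_scope.
Lemma cnt_sum {A} (f : A -> bool) (l : list A) :
  length (filter f l) = list_sum (map (fun x => if f x then 1 else 0) l).
Proof. induction l as [|a l IH]; simpl; [reflexivity|]. destruct (f a); simpl; lia. Qed.

Lemma sum_add {A} (f g : A -> nat) (l : list A) :
  list_sum (map (fun x => f x + g x) l) = list_sum (map f l) + list_sum (map g l).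
Proof. induction l as [|a l IH]; simpl; lia. Qed.

Lemma sum_exch {A B} (h : A -> B -> nat) (l1 : list A) (l2 : list B) :
  list_sum (map (fun a => list_sum (map (fun b => h a b) l2)) l1) =
  list_sum (map (fun b => list_sum (map (fun a => h a b) l1)) l2).
Proof.
  induction l1 as [|a l1 IH]; simpl.
  - induction l2; simpl; lia.
  - rewrite IH. rewrite <- sum_add. reflexivity.
Qed.

Lemma seq_shift_add (a b len : nat) : map (fun i => i + b) (seq a len) = seq (a + b) len.
Proof.
  revert a. induction len as [|len IH]; intros a; simpl; [reflexivity|].
  f_equal. rewrite IH. f_equal.
Qed.

Lemma sum_shift (g : nat -> nat) (a b len : nat) :
  list_sum (map g (seq (a + b) len)) = list_sum (map (fun i => g (i + b)) (seq a len)).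
Proof. rewrite <- seq_shift_add, map_map. reflexivity. Qed.

Lemma sum_block (g : nat -> nat) (a c N : nat) :
  list_sum (map g (seq a (c * N))) =
  list_sum (map (fun t => list_sum (map g (seq (a + t * N) N))) (seq 0 c)).
Proof.
  induction c as [|c IH]; [reflexivity|].
  rewrite Nat.mul_succ_l, seq_app, map_app, list_sum_app, IH.
  rewrite seq_S, map_app, list_sum_app. simpl. lia.
Qed.

Lemma sum_ext_in (f g : nat -> nat) (l : list nat) :
  (forall x, In x l -> f x = g x) -> list_sum (map f l) = list_sum (map g l).
Proof. intros H. f_equal. apply map_ext_in. auto. Qed.

Lemma sum_elem (g : nat -> nat) (l : list nat) (x : nat) :
  In x l -> g x <= list_sum (map g l).
Proof.
  induction l as [|a l IH]; simpl; [tauto|].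
  intros [E|H]; [subst; lia|]. specialize (IH H). lia.
Qed.

Lemma sum_split (g : nat -> nat) (a len t : nat) :
  a <= t < a + len ->
  list_sum (map g (seq a len)) =
  list_sum (map g (seq a (t - a))) + g t + list_sum (map g (seq (S t) (a + len - S t))).
Proof.
  intros H.
  replace len with ((t - a) + S (a + len - S t)) at 1 by lia.
  rewrite seq_app, map_app, list_sum_app.
  replace (a + (t - a)) with t by lia. simpl. lia.
Qed.

Lemma sum_pair (g : nat -> nat) (a len t1 t2 : nat) :
  a <= t1 -> t1 < t2 -> t2 < a + len ->
  g t1 + g t2 <= list_sum (map g (seq a len)).
Proof.
  intros H1 H2 H3. rewrite (sum_split g a len t2) by lia.
  pose proof (sum_elem g (seq a (t2 - a)) t1 ltac:(apply in_seq; lia)). lia.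
Qed.

Lemma sum_triple (g : nat -> nat) (a len t1 t0 t2 : nat) :
  a <= t1 -> t1 < t0 -> t0 < t2 -> t2 < a + len ->
  g t1 + g t0 + g t2 <= list_sum (map g (seq a len)).
Proof.
  intros H1 H2 H3 H4. rewrite (sum_split g a len t0) by lia.
  pose proof (sum_elem g (seq a (t0 - a)) t1 ltac:(apply in_seq; lia)).
  pose proof (sum_elem g (seq (S t0) (a + len - S t0)) t2 ltac:(apply in_seq; lia)). lia.
Qed.

Lemma sum_all_two (g : nat -> nat) (a len : nat) :
  (forall x, a <= x < a + len -> 2 <= g x) ->
  list_sum (map g (seq a len)) = 2 * len ->
  forall x, a <= x < a + len -> g x = 2.
Proof.
  revert a. induction len as [|len IH]; intros a Hge Hs x Hx; [lia|].
  simpl in Hs.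
  assert (Hl : 2 * len <= list_sum (map g (seq (S a) len))).
  { clear -Hge. revert a Hge. induction len as [|len IH]; intros a Hge; simpl; [lia|].
    pose proof (Hge (S a) ltac:(lia)). specialize (IH (S a)).
    assert (2 * len <= list_sum (map g (seq (S (S a)) len))) by (apply IH; intros; apply Hge; lia).
    lia. }
  pose proof (Hge a ltac:(lia)).
  destruct (Nat.eq_dec x a) as [E|E].
  - subst. lia.
  - apply (IH (S a)); [intros; apply Hge; lia| lia | lia].
Qed.

Local Open Scope Z_scope.
Lemma prod_app (l1 l2 : list (Z -> Z)) (X : Z) :
  prod (l1 ++ l2) X = prod l1 (prod l2 X).
Proof. induction l1 as [|a l IH]; simpl; [reflexivity|]. unfold comp. now rewrite IH. Qed.

Lemma prefix_S (n : nat) (sk : list bool) (r : nat) (X : Z) :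
  prefix n sk (S r) X = prefix n sk r (letter n sk (S r) X).
Proof.
  unfold prefix. rewrite seq_S, map_app, prod_app. simpl. reflexivity.
Qed.

Lemma prefix_0 (n : nat) (sk : list bool) (X : Z) : prefix n sk 0 X = X.
Proof. reflexivity. Qed.

Lemma prefix_inv_S (n : nat) (sk : list bool) (r : nat) (X : Z) :
  prefix_inv n sk (S r) X = letter n sk (S r) (prefix_inv n sk r X).
Proof.
  unfold prefix_inv. rewrite seq_S, rev_app_distr. simpl. reflexivity.
Qed.

Lemma mod_small_neq (p a d : Z) : 0 < d < p -> (a + d) mod p <> a mod p.
Proof.
  intros Hd Heq.
  pose proof (Z.div_mod (a + d) p ltac:(lia)) as E1.
  pose proof (Z.div_mod a p ltac:(lia)) as E2.
  rewrite Heq in E1.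
  assert (Hq : d = p * ((a + d) / p - a / p)) by lia.
  destruct (Z_le_gt_dec ((a + d) / p - a / p) 0); nia.
Qed.

Lemma s_eval (n : nat) (i X : Z) :
  s n i X = if Z.eqb (X mod Z.of_nat n) (i mod Z.of_nat n) then X + 1
            else if Z.eqb (X mod Z.of_nat n) ((i+1) mod Z.of_nat n) then X - 1
            else X.
Proof.
  unfold s, refl. replace (i + 1 - i) with 1 by lia. replace (i - (i+1)) with (-1) by lia.
  destruct (Z.eqb _ _); [reflexivity|]. destruct (Z.eqb _ _); [lia|reflexivity].
Qed.

Lemma s_invol (n : nat) (Hn : (2 <= n)%nat) (i X : Z) : s n i (s n i X) = X.
Proof.
  set (p := Z.of_nat n).
  assert (Hp : 2 <= p) by (unfold p; lia).
  assert (Hab : (i + 1) mod p <> i mod p) by (apply mod_small_neq; lia).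
  rewrite (s_eval n i X). fold p.
  destruct (Z.eqb_spec (X mod p) (i mod p)) as [E1|E1].
  - rewrite s_eval. fold p.
    assert (E : (X + 1) mod p = (i + 1) mod p).
    { rewrite Z.add_mod by lia. rewrite E1. rewrite <- Z.add_mod by lia. reflexivity. }
    rewrite E. destruct (Z.eqb_spec ((i+1) mod p) (i mod p)); [contradiction|].
    rewrite Z.eqb_refl. lia.
  - destruct (Z.eqb_spec (X mod p) ((i+1) mod p)) as [E2|E2].
    + rewrite s_eval. fold p.
      assert (E : (X - 1) mod p = i mod p).
      { rewrite Zminus_mod. rewrite E2. rewrite <- Zminus_mod.
        replace (i + 1 - 1) with i by lia. reflexivity. }
      rewrite E, Z.eqb_refl. lia.
    + rewrite s_eval. fold p.
      destruct (Z.eqb_spec (X mod p) (i mod p)); [contradiction|].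
      destruct (Z.eqb_spec (X mod p) ((i+1) mod p)); [contradiction|]. reflexivity.
Qed.

Lemma letter_invol (n : nat) (Hn : (2 <= n)%nat) (sk : list bool) (j : nat) (X : Z) :
  letter n sk j (letter n sk j X) = X.
Proof.
  unfold letter. destruct (is_skip sk j); [reflexivity|]. unfold sigma. apply s_invol; auto.
Qed.

Lemma prefix_inv_l (n : nat) (Hn : (2 <= n)%nat) (sk : list bool) (r : nat) (X : Z) :
  prefix n sk r (prefix_inv n sk r X) = X.
Proof.
  revert X. induction r as [|r IH]; intros X; [reflexivity|].
  rewrite prefix_S, prefix_inv_S, letter_invol by auto. apply IH.
Qed.

Lemma prefix_inv_r (n : nat) (Hn : (2 <= n)%nat) (sk : list bool) (r : nat) (X : Z) :
  prefix_inv n sk r (prefix n sk r X) = X.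
Proof.
  revert X. induction r as [|r IH]; intros X; [reflexivity|].
  rewrite prefix_S, prefix_inv_S, IH by auto. apply letter_invol; auto.
Qed.

Lemma s_per (n : nat) (Hn : (2 <= n)%nat) (i X q : Z) :
  s n i (X + q * Z.of_nat n) = s n i X + q * Z.of_nat n.
Proof.
  rewrite !s_eval. rewrite Z.mod_add by lia.
  destruct (Z.eqb _ _); [lia|]. destruct (Z.eqb _ _); lia.
Qed.

Lemma letter_per (n : nat) (Hn : (2 <= n)%nat) (sk : list bool) (j : nat) (X q : Z) :
  letter n sk j (X + q * Z.of_nat n) = letter n sk j X + q * Z.of_nat n.
Proof. unfold letter. destruct (is_skip sk j); [reflexivity|]. unfold sigma. apply s_per; auto. Qed.

Lemma prefix_per (n : nat) (Hn : (2 <= n)%nat) (sk : list bool) (r : nat) (X q : Z) :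
  prefix n sk r (X + q * Z.of_nat n) = prefix n sk r X + q * Z.of_nat n.
Proof.
  revert X. induction r as [|r IH]; intros X; [reflexivity|].
  rewrite !prefix_S, letter_per by auto. apply IH.
Qed.

Lemma prefix_class (n : nat) (Hn : (2 <= n)%nat) (sk : list bool) (r : nat) (a b : Z) :
  prefix n sk r a mod Z.of_nat n = prefix n sk r b mod Z.of_nat n ->
  a mod Z.of_nat n = b mod Z.of_nat n.
Proof.
  set (p := Z.of_nat n). assert (Hp : 2 <= p) by (unfold p; lia). intros H.
  set (u := prefix n sk r).
  pose proof (Z.div_mod (u a) p ltac:(lia)). pose proof (Z.div_mod (u b) p ltac:(lia)).
  assert (E : u a = u (b + (u a / p - u b / p) * p)).
  { unfold u. rewrite prefix_per by auto. fold u. fold p.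
    rewrite Z.mul_sub_distr_r.
    rewrite (Z.mul_comm (u a / p)), (Z.mul_comm (u b / p)). change (u a mod p = u b mod p) in H. lia. }
  apply (f_equal (prefix_inv n sk r)) in E. unfold u in E. rewrite !prefix_inv_r in E by auto.
  rewrite E. rewrite Z.mod_add by lia. reflexivity.
Qed.

Lemma same_class (p a b : Z) : 0 < p -> a mod p = b mod p -> a = b + ((a - b) / p) * p.
Proof.
  intros Hp H.
  assert (E : (a - b) mod p = 0).
  { rewrite Zminus_mod, H, Z.sub_diag. reflexivity. }
  pose proof (Z.div_mod (a - b) p ltac:(lia)). rewrite E in H0. lia.
Qed.

Lemma prefix_class_iff (n : nat) (Hn : (2 <= n)%nat) (sk : list bool) (r : nat) (a b : Z) :
  prefix n sk r a mod Z.of_nat n = prefix n sk r b mod Z.of_nat n <->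
  a mod Z.of_nat n = b mod Z.of_nat n.
Proof.
  split; [apply prefix_class; auto|].
  intros H. assert (E : a = b + ((a - b) / Z.of_nat n) * Z.of_nat n)
    by (apply same_class; [lia|exact H]).
  rewrite E. rewrite prefix_per by auto. rewrite Z.mod_add by lia. reflexivity.
Qed.

Lemma conj_formula (n : nat) (Hn : (2 <= n)%nat) (sk : list bool) (r : nat) (i X : Z) :
  prefix n sk r (s n i (prefix_inv n sk r X)) =
  refl n (prefix n sk r i) (prefix n sk r (i + 1)) X.
Proof.
  set (p := Z.of_nat n). assert (Hp : 2 <= p) by (unfold p; lia).
  set (u := prefix n sk r). set (y := prefix_inv n sk r X).
  assert (HX : X = u y) by (unfold u, y; rewrite prefix_inv_l; auto).
  assert (Hab : (i + 1) mod p <> i mod p) by (apply mod_small_neq; lia).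
  assert (Hcl : forall a b, u a mod p = u b mod p <-> a mod p = b mod p)
    by (intros; apply prefix_class_iff; auto).
  unfold refl. fold p. rewrite s_eval. fold p.
  destruct (Z.eqb_spec (y mod p) (i mod p)) as [E1|E1].
  - assert (Ey : y = i + ((y - i)/p) * p) by (apply same_class; lia).
    assert (EX : X mod p = u i mod p) by (rewrite HX; apply Hcl; auto).
    rewrite EX, Z.eqb_refl.
    rewrite HX, Ey. replace (i + (y - i) / p * p + 1) with ((i + 1) + (y - i) / p * p) by lia.
    unfold u. rewrite !prefix_per by auto. lia.
  - destruct (Z.eqb_spec (y mod p) ((i + 1) mod p)) as [E2|E2].
    + assert (Ey : y = (i+1) + ((y - (i+1))/p) * p) by (apply same_class; lia).
      assert (EX : X mod p = u (i+1) mod p) by (rewrite HX; apply Hcl; auto).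
      assert (NX : X mod p <> u i mod p).
      { rewrite EX. intro C. apply (proj1 (Hcl _ _)) in C. apply Hab. exact C. }
      destruct (Z.eqb_spec (X mod p) (u i mod p)); [contradiction|].
      rewrite EX, Z.eqb_refl.
      rewrite HX, Ey. replace (i + 1 + (y - (i + 1)) / p * p - 1) with (i + (y - (i + 1)) / p * p) by lia.
      unfold u. rewrite !prefix_per by auto. lia.
    + assert (N1 : X mod p <> u i mod p) by (rewrite HX; intro C; apply (proj1 (Hcl _ _)) in C; auto).
      assert (N2 : X mod p <> u (i+1) mod p) by (rewrite HX; intro C; apply (proj1 (Hcl _ _)) in C; auto).
      destruct (Z.eqb_spec (X mod p) (u i mod p)); [contradiction|].
      destruct (Z.eqb_spec (X mod p) (u (i+1) mod p)); [contradiction|].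
      auto.
Qed.

Lemma sigma_S (n : nat) (Hn : (2 <= n)%nat) (r : nat) (X : Z) :
  sigma n (S r) X =
  if Z.eqb (X mod Z.of_nat n) (Z.of_nat r mod Z.of_nat n) then X + 1
  else if Z.eqb (X mod Z.of_nat n) ((Z.of_nat r + 1) mod Z.of_nat n) then X - 1
  else X.
Proof.
  unfold sigma. replace (S r - 1)%nat with r by lia. rewrite s_eval.
  rewrite Nat2Z.inj_mod. rewrite Z.mod_mod by lia. rewrite Z.add_mod_idemp_l by lia.
  reflexivity.
Qed.

Lemma step_eq (n : nat) (sk : list bool) (r : nat) (X : Z) :
  prefix n sk (S r) X =
  prefix n sk r (if is_skip sk (S r) then X else sigma n (S r) X).
Proof. rewrite prefix_S. unfold letter. destruct (is_skip sk (S r)); reflexivity. Qed.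

Lemma win_mid (n : nat) (Hn : (2 <= n)%nat) (sk : list bool) (r : nat) (X : Z) :
  Z.of_nat r + 2 <= X <= Z.of_nat r + Z.of_nat n - 1 ->
  prefix n sk (S r) X = prefix n sk r X.
Proof.
  intros HX. rewrite step_eq. destruct (is_skip sk (S r)); [reflexivity|].
  rewrite sigma_S by auto.
  assert (N1 : X mod Z.of_nat n <> Z.of_nat r mod Z.of_nat n).
  { replace X with (Z.of_nat r + (X - Z.of_nat r)) by lia. apply mod_small_neq. lia. }
  assert (N2 : X mod Z.of_nat n <> (Z.of_nat r + 1) mod Z.of_nat n).
  { replace X with ((Z.of_nat r + 1) + (X - Z.of_nat r - 1)) by lia. apply mod_small_neq. lia. }
  destruct (Z.eqb_spec (X mod Z.of_nat n) (Z.of_nat r mod Z.of_nat n)); [contradiction|].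
  destruct (Z.eqb_spec (X mod Z.of_nat n) ((Z.of_nat r + 1) mod Z.of_nat n)); [contradiction|].
  reflexivity.
Qed.

Lemma win_front (n : nat) (Hn : (2 <= n)%nat) (sk : list bool) (r : nat) :
  prefix n sk (S r) (Z.of_nat r + 1) =
  if is_skip sk (S r) then prefix n sk r (Z.of_nat r + 1) else prefix n sk r (Z.of_nat r).
Proof.
  rewrite step_eq. destruct (is_skip sk (S r)); [reflexivity|].
  rewrite sigma_S by auto.
  assert (N1 : (Z.of_nat r + 1) mod Z.of_nat n <> Z.of_nat r mod Z.of_nat n)
    by (apply mod_small_neq; lia).
  destruct (Z.eqb_spec ((Z.of_nat r + 1) mod Z.of_nat n) (Z.of_nat r mod Z.of_nat n)); [contradiction|].
  rewrite Z.eqb_refl. f_equal. lia.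
Qed.

Lemma win_back (n : nat) (Hn : (2 <= n)%nat) (sk : list bool) (r : nat) :
  prefix n sk (S r) (Z.of_nat r + Z.of_nat n) =
  if is_skip sk (S r) then prefix n sk r (Z.of_nat r) + Z.of_nat n
  else prefix n sk r (Z.of_nat r + 1) + Z.of_nat n.
Proof.
  rewrite step_eq. destruct (is_skip sk (S r)).
  - replace (Z.of_nat r + Z.of_nat n) with (Z.of_nat r + 1 * Z.of_nat n) by lia.
    rewrite prefix_per by auto. lia.
  - rewrite sigma_S by auto.
    replace (Z.of_nat r + Z.of_nat n) with (Z.of_nat r + 1 * Z.of_nat n) by lia.
    rewrite Z.mod_add by lia. rewrite Z.eqb_refl.
    replace (Z.of_nat r + 1 * Z.of_nat n + 1) with ((Z.of_nat r + 1) + 1 * Z.of_nat n) by lia.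
    rewrite prefix_per by auto. lia.
Qed.

Lemma stable (n : nat) (Hn : (2 <= n)%nat) (sk : list bool) (d r : nat) (X : Z) :
  Z.of_nat r + Z.of_nat d + 1 <= X <= Z.of_nat r + Z.of_nat n - 1 ->
  prefix n sk (r + d) X = prefix n sk r X.
Proof.
  induction d as [|d IH]; intros HX.
  - now rewrite Nat.add_0_r.
  - rewrite Nat.add_succ_r. rewrite win_mid by (auto; lia). apply IH. lia.
Qed.

Definition kv (n : nat) (X v : Z) : Z :=
  X - v mod Z.of_nat n - (Z.of_nat n - 1) * (v / Z.of_nat n).

Definition kap (n : nat) (sk : list bool) (r : nat) (X : Z) : Z :=
  kv n X (prefix n sk r X).

Lemma kv_shift (n : nat) (Hn : (2 <= n)%nat) (X v : Z) :
  kv n X (v + Z.of_nat n) = kv n (X - Z.of_nat n + 1) v.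
Proof.
  unfold kv. replace (v + Z.of_nat n) with (v + 1 * Z.of_nat n) by lia.
  rewrite Z.mod_add by lia. rewrite Z.div_add by lia. lia.
Qed.

Lemma kv_pos (n : nat) (X v : Z) : kv n (X + 1) v = kv n X v + 1.
Proof. unfold kv. lia. Qed.

Lemma kap_lower (n : nat) (Hn : (2 <= n)%nat) (sk : list bool) (r : nat) (X : Z) :
  Z.of_nat r <= X <= Z.of_nat r + Z.of_nat n - 1 -> 0 <= kap n sk r X.
Proof.
  revert X. induction r as [|r IH]; intros X HX.
  - unfold kap, kv. rewrite prefix_0. simpl in HX.
    rewrite Z.mod_small by lia. rewrite Z.div_small by lia. lia.
  - rewrite Nat2Z.inj_succ in HX.
    destruct (Z.eq_dec X (Z.of_nat r + 1)) as [E|E].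
    + subst X. unfold kap. rewrite win_front by auto.
      destruct (is_skip sk (S r)).
      * apply IH. lia.
      * rewrite kv_pos. pose proof (IH (Z.of_nat r) ltac:(lia)). unfold kap in H. lia.
    + destruct (Z.eq_dec X (Z.of_nat r + Z.of_nat n)) as [E2|E2].
      * subst X. unfold kap. rewrite win_back by auto.
        destruct (is_skip sk (S r)); rewrite kv_shift by auto.
        -- replace (Z.of_nat r + Z.of_nat n - Z.of_nat n + 1) with (Z.of_nat r + 1) by lia.
           rewrite kv_pos. pose proof (IH (Z.of_nat r) ltac:(lia)). unfold kap in H. lia.
        -- replace (Z.of_nat r + Z.of_nat n - Z.of_nat n + 1) with (Z.of_nat r + 1) by lia.
           apply IH. lia.
      * unfold kap. rewrite win_mid by (auto; lia). apply IH. lia.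
Qed.

Lemma kap_fwd1 (n : nat) (Hn : (2 <= n)%nat) (sk : list bool) (r : nat) (X : Z) :
  Z.of_nat r <= X <= Z.of_nat r + Z.of_nat n - 1 ->
  exists X', Z.of_nat r + 1 <= X' <= Z.of_nat r + Z.of_nat n /\
    kap n sk (S r) X' >= kap n sk r X + (if Z.eqb X (Z.of_nat r) then 1 else 0).
Proof.
  intros HX.
  destruct (Z.eqb_spec X (Z.of_nat r)) as [E|E].
  - subst X. destruct (is_skip sk (S r)) eqn:Hs.
    + exists (Z.of_nat r + Z.of_nat n). split; [lia|].
      unfold kap. rewrite win_back, Hs by auto. rewrite kv_shift by auto.
      replace (Z.of_nat r + Z.of_nat n - Z.of_nat n + 1) with (Z.of_nat r + 1) by lia.
      rewrite kv_pos. lia.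
    + exists (Z.of_nat r + 1). split; [lia|].
      unfold kap. rewrite win_front, Hs by auto. rewrite kv_pos. lia.
  - destruct (Z.eq_dec X (Z.of_nat r + 1)) as [E1|E1].
    + subst X. destruct (is_skip sk (S r)) eqn:Hs.
      * exists (Z.of_nat r + 1). split; [lia|].
        unfold kap. rewrite win_front, Hs by auto. lia.
      * exists (Z.of_nat r + Z.of_nat n). split; [lia|].
        unfold kap. rewrite win_back, Hs by auto. rewrite kv_shift by auto.
        replace (Z.of_nat r + Z.of_nat n - Z.of_nat n + 1) with (Z.of_nat r + 1) by lia. lia.
    + exists X. split; [lia|]. unfold kap. rewrite win_mid by (auto; lia). lia.
Qed.

Lemma kap_fwd (n : nat) (Hn : (2 <= n)%nat) (sk : list bool) (d r : nat) (X : Z) :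
  Z.of_nat r <= X <= Z.of_nat r + Z.of_nat n - 1 ->
  exists X', Z.of_nat r + Z.of_nat d <= X' <= Z.of_nat r + Z.of_nat d + Z.of_nat n - 1 /\
    kap n sk (r + d) X' >= kap n sk r X.
Proof.
  induction d as [|d IH]; intros HX.
  - exists X. rewrite Nat.add_0_r. split; lia.
  - destruct (IH HX) as [X1 [H1 H2]].
    destruct (kap_fwd1 n Hn sk (r + d) X1 ltac:(lia)) as [X2 [H3 H4]].
    exists X2. rewrite Nat.add_succ_r. split; [lia|].
    destruct (Z.eqb _ _); lia.
Qed.

Lemma kap_final (n : nat) (Hn : (2 <= n)%nat) (sk : list bool)
  (Hid : forall k, prefix n sk (n * (n - 1)) k = k) (X : Z) :
  Z.of_nat (n * (n - 1)) <= X <= Z.of_nat (n * (n - 1)) + Z.of_nat n - 1 ->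
  kap n sk (n * (n - 1)) X = Z.of_nat n - 1.
Proof.
  intros HX. unfold kap, kv. rewrite Hid.
  set (p := Z.of_nat n) in *.
  assert (EM : Z.of_nat (n * (n - 1)) = p * (p - 1)) by (unfold p; rewrite Nat2Z.inj_mul, Nat2Z.inj_sub by lia; lia).
  rewrite EM in HX.
  assert (Ed : X / p = p - 1).
  { symmetry; apply Z.div_unique with (X - p * (p - 1)); lia. }
  assert (Em : X mod p = X - p * (p - 1)).
  { symmetry; apply Z.mod_unique with (p - 1); lia. }
  rewrite Ed, Em. lia.
Qed.

Lemma kap_carrier_upper (n : nat) (Hn : (2 <= n)%nat) (sk : list bool)
  (Hid : forall k, prefix n sk (n * (n - 1)) k = k) (r : nat) :
  (r < n * (n - 1))%nat -> kap n sk r (Z.of_nat r) <= Z.of_nat n - 2.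
Proof.
  intros Hr.
  destruct (kap_fwd1 n Hn sk r (Z.of_nat r) ltac:(lia)) as [X1 [H1 H2]].
  rewrite Z.eqb_refl in H2.
  destruct (kap_fwd n Hn sk (n * (n - 1) - S r) (S r) X1 ltac:(rewrite Nat2Z.inj_succ; lia)) as [X2 [H3 H4]].
  replace (S r + (n * (n - 1) - S r))%nat with (n * (n - 1))%nat in H4 by lia.
  rewrite kap_final in H4 by (auto; rewrite Nat2Z.inj_succ in H3; rewrite Nat2Z.inj_sub in H3 by lia;
     rewrite Nat2Z.inj_succ in H3; lia).
  lia.
Qed.

Definition occ (n : nat) (sk : list bool) (k t : nat) : Z :=
  prefix n sk (k + t * (n - 1) - 1) (Z.of_nat (k + t * (n - 1))).

Definition carr (n : nat) (sk : list bool) (j : nat) : Z :=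
  prefix n sk (j - 1) (Z.of_nat (j - 1)).

Lemma occ_rec (n : nat) (Hn : (2 <= n)%nat) (sk : list bool) (k t : nat) :
  (1 <= k)%nat ->
  occ n sk k (S t) =
  (if is_skip sk (k + t * (n - 1)) then carr n sk (k + t * (n - 1)) else occ n sk k t)
  + Z.of_nat n.
Proof.
  intros Hk. unfold occ, carr.
  rewrite Nat.mul_succ_l.
  remember (t * (n - 1))%nat as u eqn:Hu. clear Hu.
  set (r := (k + u - 1)%nat).
  assert (Er : (k + u)%nat = S r) by (unfold r; lia).
  assert (Er2 : (k + (u + (n - 1)) - 1)%nat = (S r + (n - 2))%nat) by (unfold r; lia).
  assert (EX : Z.of_nat (k + (u + (n - 1))) = Z.of_nat r + Z.of_nat n) by (unfold r; lia).
  rewrite Er2, EX. rewrite stable by (auto; rewrite Nat2Z.inj_succ, Nat2Z.inj_sub by lia; lia).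
  rewrite win_back by auto. rewrite Er. replace (S r - 1)%nat with r by lia.
  destruct (is_skip sk (S r)); [reflexivity|].
  f_equal. f_equal. rewrite Nat2Z.inj_succ. lia.
Qed.

Lemma occ_0 (n : nat) (Hn : (2 <= n)%nat) (sk : list bool) (k : nat) :
  (1 <= k <= n - 1)%nat -> occ n sk k 0 = Z.of_nat k.
Proof.
  intros Hk. unfold occ. rewrite Nat.mul_0_l, Nat.add_0_r.
  replace (k - 1)%nat with (0 + (k - 1))%nat by lia.
  rewrite stable by (auto; rewrite Nat2Z.inj_sub by lia; lia). reflexivity.
Qed.

Lemma occ_last (n : nat) (Hn : (2 <= n)%nat) (sk : list bool) (k : nat) :
  (1 <= k <= n - 1)%nat ->
  occ n sk k n = prefix n sk (n * (n - 1)) (Z.of_nat (k + n * (n - 1))).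
Proof.
  intros Hk. unfold occ.
  replace (k + n * (n - 1) - 1)%nat with (n * (n - 1) + (k - 1))%nat by lia.
  rewrite stable by (auto; rewrite Nat2Z.inj_sub by lia; rewrite Nat2Z.inj_add; lia).
  reflexivity.
Qed.

Lemma asc_arith (n : nat) (Hn : (2 <= n)%nat) (R c y : Z) :
  (0 <= kv n R c /\ kv n (R + 1) y = 0) \/
  (kv n R c = Z.of_nat n - 2 /\ kv n (R + 1) y <= Z.of_nat n - 2) -> c < y.
Proof.
  unfold kv. set (p := Z.of_nat n). assert (Hp : 2 <= p) by (unfold p; lia).
  pose proof (Z.div_mod c p ltac:(lia)). pose proof (Z.div_mod y p ltac:(lia)).
  pose proof (Z.mod_pos_bound c p ltac:(lia)). pose proof (Z.mod_pos_bound y p ltac:(lia)).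
  set (qc := c / p) in *. set (qy := y / p) in *. set (vc := c mod p) in *. set (vy := y mod p) in *.
  intros Hc.
  destruct (Z_lt_le_dec (qy - qc) 0) as [D|D].
  - exfalso. assert ((p - 1) * (qy - qc) <= -(p - 1)) by nia. lia.
  - destruct (Z.eq_dec (qy - qc) 0) as [D2|D2].
    + assert (qy = qc) by lia. rewrite H3 in *. nia.
    + assert (p * (qy - qc) >= p) by nia. nia.
Qed.

Lemma occ_run (n : nat) (Hn : (2 <= n)%nat) (sk : list bool) (k : nat) (Hk : (1 <= k)%nat) :
  forall d a, (forall t, (a <= t < a + d)%nat -> is_skip sk (k + t * (n - 1)) = false) ->
  occ n sk k (a + d) = occ n sk k a + Z.of_nat d * Z.of_nat n.
Proof.
  induction d as [|d IH]; intros a H.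
  - rewrite Nat.add_0_r. lia.
  - rewrite Nat.add_succ_r, occ_rec by auto. rewrite H by lia. rewrite IH by (intros; apply H; lia). lia.
Qed.

Lemma front_class (n : nat) (Hn : (2 <= n)%nat) (sk : list bool) (r : nat) :
  prefix n sk r (Z.of_nat r) mod Z.of_nat n <> prefix n sk r (Z.of_nat r + 1) mod Z.of_nat n.
Proof.
  intros E. apply prefix_class in E; auto.
  apply (mod_small_neq (Z.of_nat n) (Z.of_nat r) 1); [lia|]. auto.
Qed.

Lemma occ_front (n : nat) (sk : list bool) (k t : nat) : (1 <= k)%nat ->
  occ n sk k t = prefix n sk (k + t * (n - 1) - 1) (Z.of_nat (k + t * (n - 1) - 1) + 1).
Proof. intros Hk. unfold occ. f_equal. remember (t * (n - 1))%nat as u. lia. Qed.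

Lemma exists_or_all (P : nat -> bool) (n : nat) :
  (exists t, (t < n)%nat /\ P t = true) \/ (forall t, (t < n)%nat -> P t = false).
Proof.
  destruct (existsb P (seq 0 n)) eqn:E.
  - left. apply existsb_exists in E. destruct E as [t [Ht HP]]. apply in_seq in Ht. exists t. split; [lia|auto].
  - right. intros t Ht. destruct (P t) eqn:Pt; [|reflexivity].
    assert (existsb P (seq 0 n) = true) by (apply existsb_exists; exists t; split; [apply in_seq; lia|auto]).
    congruence.
Qed.

Lemma seat_two (n : nat) (Hn : (2 <= n)%nat) (sk : list bool)
  (Hid : forall k, prefix n sk (n * (n - 1)) k = k) (k : nat) :
  (1 <= k <= n - 1)%nat ->
  exists t1 t2, (t1 < t2 < n)%nat /\ is_skip sk (k + t1 * (n - 1)) = true /\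
                is_skip sk (k + t2 * (n - 1)) = true.
Proof.
  intros Hk.
  assert (Hfin : occ n sk k n = Z.of_nat k + Z.of_nat n * (Z.of_nat n - 1)).
  { rewrite occ_last, Hid by auto. rewrite Nat2Z.inj_add, Nat2Z.inj_mul, Nat2Z.inj_sub by lia. lia. }
  pose proof (occ_0 n Hn sk k Hk) as H0.
  destruct (exists_or_all (fun t => is_skip sk (k + t * (n - 1))) n) as [[t0 [Ht0 Hs0]]|Hall].
  - destruct (exists_or_all (fun t => andb (negb (Nat.eqb t t0)) (is_skip sk (k + t * (n - 1)))) n)
      as [[t1 [Ht1 Hs1]]|Hall].
    + apply andb_prop in Hs1. destruct Hs1 as [Hne Hs1]. apply Bool.negb_true_iff, Nat.eqb_neq in Hne.
      assert (L : (t0 < t1 \/ t1 < t0)%nat) by lia.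
      destruct L as [L|L].
      * exists t0, t1. auto.
      * exists t1, t0. auto.
    + exfalso.
      assert (Hother : forall t, (t < n)%nat -> t <> t0 -> is_skip sk (k + t * (n - 1)) = false).
      { intros t Ht Hne. specialize (Hall t Ht). simpl in Hall.
        apply Nat.eqb_neq in Hne. rewrite Hne in Hall. exact Hall. }
      assert (E1 : occ n sk k t0 = Z.of_nat k + Z.of_nat t0 * Z.of_nat n).
      { rewrite <- H0. replace t0 with (0 + t0)%nat at 1 by lia. apply (occ_run n Hn sk k ltac:(lia)).
        intros t Ht. apply Hother; lia. }
      assert (E2 : occ n sk k (S t0) = carr n sk (k + t0 * (n - 1)) + Z.of_nat n).
      { rewrite occ_rec by lia. rewrite Hs0. reflexivity. }
      assert (E3 : occ n sk k n = occ n sk k (S t0) + Z.of_nat (n - S t0) * Z.of_nat n).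
      { replace (occ n sk k n) with (occ n sk k (S t0 + (n - S t0))) by (f_equal; lia).
        apply (occ_run n Hn sk k ltac:(lia)).
        intros t Ht. apply Hother; lia. }
      pose proof (front_class n Hn sk (k + t0 * (n - 1) - 1)) as FC.
      rewrite <- occ_front in FC by lia. fold (carr n sk (k + t0 * (n - 1))) in FC.
      rewrite E1 in FC.
      assert (Ec : carr n sk (k + t0 * (n - 1)) =
                   Z.of_nat k + (Z.of_nat n - 2 - Z.of_nat (n - S t0)) * Z.of_nat n).
      { rewrite E2 in E3. rewrite Hfin in E3. lia. }
      rewrite Ec in FC. rewrite !Z.mod_add in FC by lia. apply FC. reflexivity.
  - exfalso.
    assert (E : occ n sk k n = occ n sk k 0 + Z.of_nat n * Z.of_nat n).
    { replace (occ n sk k n) with (occ n sk k (0 + n)) by (f_equal; lia).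
      apply (occ_run n Hn sk k ltac:(lia)). intros t Ht. apply Hall; lia. }
    rewrite Hfin, H0 in E. nia.
Qed.

Definition ind (sk : list bool) (j : nat) : nat := if is_skip sk j then 1%nat else 0%nat.

Lemma skip_total (sk : list bool) :
  length (filter (is_skip sk) (seq 1 (length sk))) = length (filter (fun b => b) sk).
Proof.
  induction sk as [|b sk IH]; [reflexivity|].
  simpl length. simpl seq. simpl filter.
  assert (E : length (filter (is_skip (b :: sk)) (seq 2 (length sk))) =
              length (filter (is_skip sk) (seq 1 (length sk)))).
  { rewrite !cnt_sum. replace 2%nat with (1 + 1)%nat by reflexivity. rewrite sum_shift.
    apply sum_ext_in. intros x Hx. apply in_seq in Hx. unfold is_skip.
    replace (x + 1 - 1)%nat with (S (x - 1)) by lia. reflexivity. }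
  unfold is_skip at 1. simpl nth. destruct b; simpl; rewrite E, IH; reflexivity.
Qed.

Lemma seat_decomp (sk : list bool) (n : nat) :
  list_sum (map (ind sk) (seq 1 (n * (n - 1)))) =
  list_sum (map (fun k => list_sum (map (fun t => ind sk (k + t * (n - 1))) (seq 0 n))) (seq 1 (n - 1))).
Proof.
  rewrite sum_block. rewrite <- sum_exch.
  apply sum_ext_in. intros t _. rewrite sum_shift. reflexivity.
Qed.

Lemma seat_exact (n : nat) (Hn : (2 <= n)%nat) (sk : list bool)
  (Hlen : length sk = (n * (n - 1))%nat)
  (Hcnt : length (filter (fun b => b) sk) = (2 * n - 2)%nat)
  (Hid : forall k, prefix n sk (n * (n - 1)) k = k) (k : nat) :
  (1 <= k <= n - 1)%nat ->
  list_sum (map (fun t => ind sk (k + t * (n - 1))) (seq 0 n)) = 2%nat.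
Proof.
  intros Hk.
  set (g := fun k => list_sum (map (fun t => ind sk (k + t * (n - 1))) (seq 0 n))).
  change (g k = 2%nat).
  apply (sum_all_two g 1 (n - 1)); [| |lia].
  - intros x Hx. destruct (seat_two n Hn sk Hid x ltac:(lia)) as [t1 [t2 [Ht [H1 H2]]]].
    unfold g. pose proof (sum_pair (fun t => ind sk (x + t * (n - 1))) 0 n t1 t2 ltac:(lia) ltac:(lia) ltac:(lia)).
    cbv beta in H. unfold ind in H at 1 2. rewrite H1, H2 in H. lia.
  - unfold g. rewrite <- seat_decomp. unfold ind. rewrite <- cnt_sum.
    rewrite <- Hlen, skip_total, Hcnt. lia.
Qed.

Lemma seat_dich (n : nat) (Hn : (2 <= n)%nat) (sk : list bool)
  (Hlen : length sk = (n * (n - 1))%nat)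
  (Hcnt : length (filter (fun b => b) sk) = (2 * n - 2)%nat)
  (Hid : forall k, prefix n sk (n * (n - 1)) k = k) (k t0 : nat) :
  (1 <= k <= n - 1)%nat -> (t0 < n)%nat -> is_skip sk (k + t0 * (n - 1)) = true ->
  (forall t, (t < t0)%nat -> is_skip sk (k + t * (n - 1)) = false) \/
  (forall t, (t0 < t < n)%nat -> is_skip sk (k + t * (n - 1)) = false).
Proof.
  intros Hk Ht0 Hs0.
  destruct (exists_or_all (fun t => andb (Nat.ltb t t0) (is_skip sk (k + t * (n - 1)))) n)
    as [[t1 [Ht1 Hs1]]|Hall1].
  - destruct (exists_or_all (fun t => andb (Nat.ltb t0 t) (is_skip sk (k + t * (n - 1)))) n)
      as [[t2 [Ht2 Hs2]]|Hall2].
    + exfalso. apply andb_prop in Hs1, Hs2. destruct Hs1 as [L1 Hs1]. destruct Hs2 as [L2 Hs2].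
      apply Nat.ltb_lt in L1, L2.
      pose proof (seat_exact n Hn sk Hlen Hcnt Hid k Hk) as E.
      pose proof (sum_triple (fun t => ind sk (k + t * (n - 1))) 0 n t1 t0 t2 ltac:(lia) L1 L2 ltac:(lia)).
      cbv beta in H. unfold ind in H at 1 2 3. rewrite Hs1, Hs0, Hs2 in H. lia.
    + right. intros t Ht. specialize (Hall2 t ltac:(lia)). simpl in Hall2.
      assert (Nat.ltb t0 t = true) by (apply Nat.ltb_lt; lia). rewrite H in Hall2. exact Hall2.
  - left. intros t Ht. specialize (Hall1 t ltac:(lia)). simpl in Hall1.
    assert (Nat.ltb t t0 = true) by (apply Nat.ltb_lt; lia). rewrite H in Hall1. exact Hall1.
Qed.

Lemma ascent (n : nat) (Hn : (2 <= n)%nat) (sk : list bool)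
  (Hlen : length sk = (n * (n - 1))%nat)
  (Hcnt : length (filter (fun b => b) sk) = (2 * n - 2)%nat)
  (Hid : forall k, prefix n sk (n * (n - 1)) k = k) (j : nat) :
  (1 <= j <= n * (n - 1))%nat -> is_skip sk j = true ->
  prefix n sk (j - 1) (Z.of_nat (j - 1)) < prefix n sk (j - 1) (Z.of_nat (j - 1) + 1).
Proof.
  intros Hj Hs.
  set (m := (n * (n - 1))%nat) in *.
  destruct (Nat.eq_dec j m) as [Em|Em].
  -
    pose proof (win_front n Hn sk (j - 1)) as F. pose proof (win_back n Hn sk (j - 1)) as B.
    replace (S (j - 1)) with j in F, B by lia. rewrite Hs in F, B.
    rewrite Em in F, B |- *. unfold m in F, B |- *. rewrite !Hid in F, B. lia.
  - set (k := ((j - 1) mod (n - 1) + 1)%nat).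
    set (t0 := ((j - 1) / (n - 1))%nat).
    assert (Hkj : j = (k + t0 * (n - 1))%nat).
    { unfold k, t0. pose proof (Nat.div_mod (j - 1) (n - 1) ltac:(lia)). lia. }
    assert (Hk : (1 <= k <= n - 1)%nat).
    { unfold k. pose proof (Nat.mod_upper_bound (j - 1) (n - 1) ltac:(lia)). lia. }
    assert (Ht0 : (t0 < n)%nat).
    { unfold t0. apply Nat.Div0.div_lt_upper_bound. unfold m in Hj. lia. }
    assert (Hs' : is_skip sk (k + t0 * (n - 1)) = true) by (rewrite <- Hkj; exact Hs).
    assert (HR : Z.of_nat (j - 1) = Z.of_nat k + Z.of_nat t0 * (Z.of_nat n - 1) - 1).
    { rewrite Hkj. rewrite Nat2Z.inj_sub by lia. rewrite Nat2Z.inj_add, Nat2Z.inj_mul, Nat2Z.inj_sub by lia. lia. }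
    apply (asc_arith n Hn (Z.of_nat (j - 1))).
    destruct (seat_dich n Hn sk Hlen Hcnt Hid k t0 Hk Ht0 Hs') as [Hbef|Haft].
    + left. split.
      * apply (kap_lower n Hn sk (j - 1) (Z.of_nat (j - 1))). lia.
      * assert (E1 : occ n sk k t0 = Z.of_nat k + Z.of_nat t0 * Z.of_nat n).
        { rewrite <- (occ_0 n Hn sk k Hk). replace (occ n sk k t0) with (occ n sk k (0 + t0)) by (f_equal; lia).
          apply (occ_run n Hn sk k ltac:(lia)). intros t Ht. apply Hbef; lia. }
        rewrite (occ_front n sk k t0 ltac:(lia)) in E1. rewrite <- Hkj in E1. rewrite E1.
        unfold kv. rewrite Z.mod_add by lia. rewrite Z.div_add by lia.
        rewrite Z.mod_small by lia. rewrite Z.div_small by lia. rewrite HR. lia.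
    + right.
      assert (Hfin : occ n sk k n = Z.of_nat k + Z.of_nat n * (Z.of_nat n - 1)).
      { rewrite occ_last, Hid by auto. rewrite Nat2Z.inj_add, Nat2Z.inj_mul, Nat2Z.inj_sub by lia. lia. }
      assert (E2 : occ n sk k (S t0) = carr n sk (k + t0 * (n - 1)) + Z.of_nat n).
      { rewrite occ_rec by lia. rewrite Hs'. reflexivity. }
      assert (E3 : occ n sk k n = occ n sk k (S t0) + Z.of_nat (n - S t0) * Z.of_nat n).
      { replace (occ n sk k n) with (occ n sk k (S t0 + (n - S t0))) by (f_equal; lia).
        apply (occ_run n Hn sk k ltac:(lia)). intros t Ht. apply Haft; lia. }
      assert (Ec : carr n sk j = Z.of_nat k + (Z.of_nat t0 - 1) * Z.of_nat n).
      { rewrite Hkj. rewrite E2 in E3. rewrite Hfin in E3. rewrite Nat2Z.inj_sub in E3 by lia.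
        rewrite Nat2Z.inj_succ in E3. nia. }
      split.
      * unfold carr in Ec. rewrite Ec. unfold kv. rewrite Z.mod_add by lia. rewrite Z.div_add by lia.
        rewrite Z.mod_small by lia. rewrite Z.div_small by lia. rewrite HR. lia.
      * pose proof (kap_carrier_upper n Hn sk Hid j ltac:(lia)) as U.
        pose proof (win_front n Hn sk (j - 1)) as F. replace (S (j - 1)) with j in F by lia.
        rewrite Hs in F. unfold kap in U.
        replace (Z.of_nat j) with (Z.of_nat (j - 1) + 1) in U by lia. rewrite F in U. exact U.
Qed.

Lemma is_skip_nil (j : nat) : is_skip [] j = false.
Proof. unfold is_skip. destruct (j - 1)%nat; reflexivity. Qed.

Lemma nil_carrier (n : nat) (Hn : (2 <= n)%nat) (r : nat) : prefix n [] r (Z.of_nat r) = 0.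
Proof.
  induction r as [|r IH]; [reflexivity|].
  rewrite Nat2Z.inj_succ. unfold Z.succ. rewrite win_front by auto. rewrite is_skip_nil. exact IH.
Qed.

Lemma full_word (n : nat) (Hn : (2 <= n)%nat) (X : Z) :
  prefix n [] (n * (n - 1)) X = lambda n X.
Proof.
  set (p := Z.of_nat n). assert (Hp : 2 <= p) by (unfold p; lia).
  set (M := Z.of_nat (n * (n - 1))).
  assert (EM : M = p * (p - 1)) by (unfold M, p; rewrite Nat2Z.inj_mul, Nat2Z.inj_sub by lia; lia).
  pose proof (Z.div_mod X p ltac:(lia)). pose proof (Z.mod_pos_bound X p ltac:(lia)).
  assert (EX : X = (M + X mod p) + (X / p - (p - 1)) * p) by (rewrite EM; lia).
  rewrite EX at 1. rewrite prefix_per by auto.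
  unfold lambda. fold p.
  destruct (Z.eqb_spec (X mod p) 0) as [E|E].
  - rewrite E, Z.add_0_r. unfold M. rewrite nil_carrier by auto. lia.
  - set (k := Z.to_nat (X mod p)).
    assert (Hk : (1 <= k <= n - 1)%nat) by (unfold k; lia).
    assert (E1 : M + X mod p = Z.of_nat (k + n * (n - 1))) by (unfold M, k; lia).
    rewrite E1. rewrite <- occ_last by auto.
    assert (E2 : occ n [] k n = occ n [] k 0 + Z.of_nat n * Z.of_nat n).
    { replace (occ n [] k n) with (occ n [] k (0 + n)) by (f_equal; lia).
      apply (occ_run n Hn [] k ltac:(lia)). intros; apply is_skip_nil. }
    rewrite E2, occ_0 by auto. fold p. unfold k. rewrite Z2Nat.id by lia. rewrite EM in *. nia.
Qed.

Lemma letter_nil (n j : nat) (X : Z) : letter n [] j X = sigma n j X.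
Proof. unfold letter. rewrite is_skip_nil. reflexivity. Qed.

Lemma tele (n : nat) (Hn : (2 <= n)%nat) (sk : list bool) (j : nat) (X : Z) :
  prefix n [] j X = prod (map (t n sk) (filter (is_skip sk) (seq 1 j))) (prefix n sk j X).
Proof.
  revert X. induction j as [|j IH]; intros X; [reflexivity|].
  rewrite prefix_S, letter_nil, IH.
  rewrite seq_S, filter_app, map_app, prod_app. simpl filter.
  rewrite prefix_S. unfold letter.
  destruct (is_skip sk (1 + j)) eqn:Hs; simpl (1 + j)%nat in *; rewrite Hs; simpl.
  - f_equal. unfold t, comp. replace (S j - 1)%nat with j by lia. rewrite prefix_inv_r by auto. reflexivity.
  - reflexivity.
Qed.

Lemma t_formula (n : nat) (Hn : (2 <= n)%nat) (sk : list bool) (j : nat) (X : Z) :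
  t n sk j X = refl n (prefix n sk (j - 1) (Z.of_nat ((j - 1) mod n)))
                      (prefix n sk (j - 1) (Z.of_nat ((j - 1) mod n) + 1)) X.
Proof. unfold t, comp, sigma. apply conj_formula; auto. Qed.

Lemma filter_seq_props (f : nat -> bool) (len a : nat) :
  (forall x, In x (filter f (seq a len)) -> (a <= x)%nat) /\
  (forall p q, (p < q < length (filter f (seq a len)))%nat ->
     (nth p (filter f (seq a len)) 0 < nth q (filter f (seq a len)) 0)%nat).
Proof.
  revert a. induction len as [|len IH]; intros a.
  - simpl. split; [tauto|]. intros; lia.
  - simpl seq. simpl filter. destruct (IH (S a)) as [IH1 IH2].
    destruct (f a) eqn:Ha.
    + split.
      * intros x [E|Hx]; [lia|]. specialize (IH1 x Hx). lia.
      * intros p q Hpq. simpl length in Hpq. destruct p as [|p]; destruct q as [|q]; try lia.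
        -- simpl. assert (In (nth q (filter f (seq (S a) len)) 0%nat) (filter f (seq (S a) len)))
             by (apply nth_In; lia).
           specialize (IH1 _ H). lia.
        -- simpl. apply IH2. lia.
    + split.
      * intros x Hx. specialize (IH1 x Hx). lia.
      * exact IH2.
Qed.

Lemma filter_seq_between (f : nat -> bool) (a len k r : nat) :
  (S k < length (filter f (seq a len)))%nat ->
  (nth k (filter f (seq a len)) 0 < r < nth (S k) (filter f (seq a len)) 0)%nat ->
  (a <= r < a + len)%nat -> f r = false.
Proof.
  intros Hk Hr Hra. destruct (f r) eqn:Hf; [|reflexivity]. exfalso.
  assert (Hin : In r (filter f (seq a len))) by (apply filter_In; split; [apply in_seq; lia|auto]).
  destruct (In_nth _ _ 0%nat Hin) as [p [Hp Ep]].
  destruct (filter_seq_props f len a) as [_ Hinc].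
  destruct (Nat.lt_trichotomy p k) as [L|[L|L]].
  - pose proof (Hinc p k ltac:(lia)). lia.
  - subst. lia.
  - destruct (Nat.eq_dec p (S k)) as [E|E].
    + subst. lia.
    + pose proof (Hinc (S k) p ltac:(lia)). lia.
Qed.

Lemma carrier_const (n : nat) (Hn : (2 <= n)%nat) (sk : list bool) (d r : nat) :
  (forall i, (r < i <= r + d)%nat -> is_skip sk i = false) ->
  prefix n sk (r + d) (Z.of_nat (r + d)) = prefix n sk r (Z.of_nat r).
Proof.
  induction d as [|d IH]; intros H.
  - rewrite Nat.add_0_r. reflexivity.
  - rewrite Nat.add_succ_r, Nat2Z.inj_succ. unfold Z.succ. rewrite win_front by auto.
    rewrite H by lia. apply IH. intros; apply H; lia.
Qed.

Lemma shift_mod (n : nat) (Hn : (2 <= n)%nat) (sk : list bool) (r : nat) (e : Z) :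
  prefix n sk r (Z.of_nat r + e) =
  prefix n sk r (Z.of_nat (r mod n) + e) + Z.of_nat (r / n) * Z.of_nat n.
Proof.
  rewrite <- prefix_per by auto. f_equal.
  pose proof (Nat.div_mod r n ltac:(lia)).
  rewrite H at 1. rewrite Nat2Z.inj_add, Nat2Z.inj_mul. lia.
Qed.

Theorem lemma5p14 (n : nat) (sk : list bool) :
  (2 <= n)%nat -> in_Sn n sk -> tree_like n (r_u n sk).
Proof.
  intros Hn [Hlen [Hcnt Hid]].
  set (J := filter (is_skip sk) (seq 1 (n * (n - 1)))).
  assert (HJlen : length J = (2 * n - 2)%nat) by (unfold J; rewrite <- Hlen, skip_total; exact Hcnt).
  assert (HJin : forall p, (p < length J)%nat ->
            (1 <= nth p J 0%nat <= n * (n - 1))%nat /\ is_skip sk (nth p J 0%nat) = true).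
  { intros p Hp. pose proof (nth_In J 0%nat Hp) as Hin. unfold J in Hin |- *.
    apply filter_In in Hin. destruct Hin as [Hin Hs]. apply in_seq in Hin. split; [lia|exact Hs]. }
  assert (Hdist : forall r : nat, prefix n sk r (Z.of_nat (r mod n)) mod Z.of_nat n <>
                                  prefix n sk r (Z.of_nat (r mod n) + 1) mod Z.of_nat n).
  { intros r E. apply prefix_class in E; auto.
    apply (mod_small_neq (Z.of_nat n) (Z.of_nat (r mod n)) 1); [lia|]. auto. }
  unfold tree_like. split.
  - unfold in_fact, r_u. fold J. split; [rewrite length_map; exact HJlen|]. split.
    + apply Forall_forall. intros x Hx. apply in_map_iff in Hx. destruct Hx as [j [Ej Hj]]. subst x.
      exists (prefix n sk (j - 1) (Z.of_nat ((j - 1) mod n))),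
             (prefix n sk (j - 1) (Z.of_nat ((j - 1) mod n) + 1)).
      split; [apply Hdist|]. intros k. apply t_formula; auto.
    + intros k. rewrite <- (full_word n Hn k). rewrite (tele n Hn sk (n * (n - 1)) k). rewrite Hid.
      reflexivity.
  - exists (fun k => prefix n sk (nth k J 0%nat - 1) (Z.of_nat ((nth k J 0%nat - 1) mod n))).
    exists (fun k => prefix n sk (nth (k - 1) J 0%nat - 1) (Z.of_nat ((nth (k - 1) J 0%nat - 1) mod n) + 1)).
    split.
    + intros k Hk. cbv beta.
      destruct (HJin (k - 1)%nat ltac:(lia)) as [Hj Hs].
      set (j := nth (k - 1) J 0%nat) in *.
      split; [|split].
      * pose proof (ascent n Hn sk Hlen Hcnt Hid j Hj Hs) as A.
        pose proof (shift_mod n Hn sk (j - 1) 0) as S0. pose proof (shift_mod n Hn sk (j - 1) 1) as S1.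
        rewrite !Z.add_0_r in S0. lia.
      * apply Hdist.
      * intros x. unfold r_u. fold J. rewrite nth_indep with (d' := t n sk 0%nat) by (rewrite length_map; lia).
        rewrite map_nth. apply t_formula; auto.
    + intros k Hk. cbv beta.
      destruct (HJin (k - 1)%nat ltac:(lia)) as [Hj Hs].
      destruct (HJin k ltac:(lia)) as [Hj' Hs'].
      set (j := nth (k - 1) J 0%nat) in *. set (j' := nth k J 0%nat) in *.
      destruct (filter_seq_props (is_skip sk) (n * (n - 1)) 1) as [_ Hinc].
      assert (Hlt : (j < j')%nat) by (unfold j, j'; apply Hinc; fold J; lia).
      assert (Hbet : forall i, (j < i <= j + (j' - 1 - j))%nat -> is_skip sk i = false).
      { intros i Hi. apply (filter_seq_between (is_skip sk) 1 (n * (n - 1)) (k - 1)).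
        - fold J. lia.
        - fold J. replace (S (k - 1)) with k by lia. fold j j'. lia.
        - lia. }
      pose proof (carrier_const n Hn sk (j' - 1 - j) j Hbet) as CC.
      replace (j + (j' - 1 - j))%nat with (j' - 1)%nat in CC by lia.
      pose proof (win_front n Hn sk (j - 1)) as F. replace (S (j - 1)) with j in F by lia.
      rewrite Hs in F. replace (Z.of_nat (j - 1) + 1) with (Z.of_nat j) in F by lia.
      pose proof (shift_mod n Hn sk (j' - 1) 0) as S0. pose proof (shift_mod n Hn sk (j - 1) 1) as S1.
      rewrite !Z.add_0_r in S0.
      replace (Z.of_nat (j - 1) + 1) with (Z.of_nat j) in S1 by lia.
      rewrite CC, F, S1 in S0.
      set (A := prefix n sk (j' - 1) (Z.of_nat ((j' - 1) mod n))) in *.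
      set (B := prefix n sk (j - 1) (Z.of_nat ((j - 1) mod n) + 1)) in *.
      assert (EA : A = B + (Z.of_nat ((j - 1) / n) - Z.of_nat ((j' - 1) / n)) * Z.of_nat n) by lia.
      rewrite EA. rewrite Z.mod_add by lia. reflexivity.
Qed.
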